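(* In the IM-OCP setting described in the context, for any initialization $r_1\in[0,B]$, any positive step sizes $(\eta_t)_{t\ge1}$, and any realization of the feedback indicators $(\mathrm{obs}_t)_{t\ge1}$, the iterates satisfy, for every $t>1$, $$r_t\in\left[-\frac{\alpha\,\varpi_t}{\mu},\; B+\frac{(1-\alpha)\,\varpi_t}{\mu}\right],\qquad \varpi_t=\max_{i\in\{1,\dots,t-1\}}\frac{\eta_i}{p_i}.$$
   Context: Fix $\alpha\in(0,1)$ and $B>0$. Let $(r_t^* )_{t\ge1}$ be an arbitrary deterministic sequence of scores with $r_t^*\in[0,B]$ (the score $r_t^*=s(X_t,Y_t)$ of the true label; the prediction set at time $t$ is $\{y: s(X_t,y)\le r_t\}$). Given thresholds $r_t$, the miscoverage indicator is $E_t=\mathbb{1}\{r_t^*>r_t\}$. The quantile loss is $\ell_{1-\alpha}(r,r^* )=(\alpha-\mathbb{1}\{r<r^*\})(r-r^* )$. Let $P$ be a probability distribution on $[0,B]$ with bounded density, $\sigma>0$, and $R(r)=\mathbb{E}_{r^*\sim P}[\ell_{1-\alpha}(r,r^* )]+\frac{\sigma}{2}r^2$; $R$ is differentiable and $\nabla R$ is a continuous strictly increasing bijection of $\mathbb{R}$. Let $\mu>0$ be a constant such that $R$ is $\mu$-strongly convex (e.g. $\mu=\sigma$). Feedback: $p_t\in(0,1]$ and $(\mathrm{obs}_t)_{t\ge1}$ are independent Bernoulli random variables with $\Pr(\mathrm{obs}_t=1)=p_t$. IM-OCP: given $r_1$ and step sizes $\eta_t>0$, for $t\ge2$ the threshold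 $r_t$ is defined by $$\nabla R(r_t)=\nabla R(r_{t-1})-\eta_{t-1}(\alpha-E_{t-1})\frac{\mathrm{obs}_{t-1}}{p_{t-1}},$$ i.e. $r_t=(\nabla R)^{-1}\big(\nabla R(r_{t-1})-\eta_{t-1}(\alpha-E_{t-1})\mathrm{obs}_{t-1}/p_{t-1}\big)$. *)

(* Defs.v *)
From HB Require Import structures.
From mathcomp Require Import all_boot all_order all_algebra.
From mathcomp Require Import all_classical all_reals all_analysis.
Set Implicit Arguments. Unset Strict Implicit. Unset Printing Implicit Defensive.
Import Order.TTheory GRing.Theory Num.Theory.
Import numFieldNormedType.Exports.
Local Open Scope classical_set_scope.
Local Open Scope ring_scope.

Definition qloss {R : realType} (alpha r rs : R) : R :=
  (alpha - (if r < rs then 1 else 0)) * (r - rs).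

Definition reg_risk {R : realType} (P : probability R R) (alpha sigma : R)
  (r : R) : R :=
  fine (\int[P]_(x in setT) (qloss alpha r x)%:E) + sigma / 2 * r ^+ 2.

Definition miscov {R : realType} (rs r : R) : R := if r < rs then 1 else 0.

Definition varpi {R : realType} (eta p : nat -> R) (t : nat) : R :=
  \big[Num.max/0]_(1 <= i < t) (eta i / p i).

Definition grad_risk {R : realType} (P : probability R R) (alpha sigma : R)
  : R -> R := derive1 (reg_risk P alpha sigma).

(* Main.v *)
Require Import Defs.
From HB Require Import structures.
From mathcomp Require Import all_boot all_order all_algebra.
From mathcomp Require Import all_classical all_reals all_analysis.
Import Order.TTheory GRing.Theory Num.Theory.
From mathcomp Require Import ring lra.
Import numFieldNormedType.Exports.
Local Open Scope classical_set_scope.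
Local Open Scope ring_scope.

Theorem lemma1 (R : realType) (alpha B sigma mu : R) (P : probability R R)
  (rstar : nat -> R) (r eta p : nat -> R) (obs : nat -> bool) :
  0 < alpha < 1 -> 0 < B -> 0 < sigma -> 0 < mu ->
  (* P is supported on [0,B] and has a bounded density w.r.t. Lebesgue measure *)
  P `[0, B]%classic = 1%E ->
  (exists (f : R -> R) (M : R),
      measurable_fun setT f /\ (forall x, 0 <= f x <= M) /\
      (forall A, measurable A ->
         P A = (\int[lebesgue_measure]_(x in A) (f x)%:E)%E)) ->
  (* stated properties of R and of its gradient *)
  (forall x, derivable (reg_risk P alpha sigma) x 1) ->
  continuous (grad_risk P alpha sigma) ->
  {mono (grad_risk P alpha sigma) : x y / x < y} ->
  (forall z, exists x, grad_risk P alpha sigma x = z) ->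
  (* R is mu-strongly convex *)
  (forall x y, reg_risk P alpha sigma x + grad_risk P alpha sigma x * (y - x)
                 + mu / 2 * (y - x) ^+ 2 <= reg_risk P alpha sigma y) ->
  (* scores, feedback probabilities, step sizes *)
  (forall t, (1 <= t)%N -> 0 <= rstar t <= B) ->
  (forall t, (1 <= t)%N -> 0 < p t <= 1) ->
  (forall t, (1 <= t)%N -> 0 < eta t) ->
  (* initialization and IM-OCP update *)
  0 <= r 1%N <= B ->
  (forall t, (2 <= t)%N ->
     grad_risk P alpha sigma (r t) =
     grad_risk P alpha sigma (r t.-1)
       - eta t.-1 * (alpha - miscov (rstar t.-1) (r t.-1)) * (if obs t.-1 then 1 else 0) / p t.-1) ->
  forall t, (1 < t)%N ->
    - (alpha * varpi eta p t) / mu <= r t <= B + (1 - alpha) * varpi eta p t / mu.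
Proof.
move=> /andP[a0 a1] B0 s0 mu0 _ _ _ _ _ _ hconv hrs hp heta /andP[r10 r1B] hup.
set g := grad_risk P alpha sigma in hconv hup *.
set Rf := reg_risk P alpha sigma in hconv.
have hsm : forall x y, mu * (y - x) ^+ 2 <= (g y - g x) * (y - x).
  move=> x y; have h1 := hconv x y; have h2 := hconv y x.

  rewrite !expr2 in h1 h2 *; nra.
have smU : forall x y c, g y <= g x + c -> 0 <= c -> mu * (y - x) <= c.
  move=> x y c h hc; have := hsm x y; rewrite expr2 => hh.
  case: (lerP y x) => hyx; first nra.
  have hd : 0 < y - x by rewrite subr_gt0.
  nra.
have smL : forall x y c, g x - c <= g y -> 0 <= c -> - c <= mu * (y - x).
  move=> x y c h hc; have := hsm x y; rewrite expr2 => hh.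
  case: (lerP x y) => hyx; first nra.
  have hd : 0 < x - y by rewrite subr_gt0.
  nra.
have bigmono : forall (s : seq nat) (F : nat -> R) x0 x1, x0 <= x1 ->
    \big[Num.max/x0]_(j <- s) F j <= \big[Num.max/x1]_(j <- s) F j /\ x1 <= \big[Num.max/x1]_(j <- s) F j.
  move=> s F x0 x1 h; elim: s => [|a s [IH1 IH2]]; first by rewrite !big_nil.
  rewrite !big_cons; split; first by rewrite ge_max !le_max lexx IH1 orbT.
  by rewrite le_max IH2 orbT.
have vS : forall n, varpi eta p n.+2 = \big[Num.max/Num.max (eta n.+1 / p n.+1) 0]_(j <- iota 1 n) (eta j / p j).
  move=> n; rewrite /varpi /index_iota subn1.
  have -> : iota 1 n.+1 = rcons (iota 1 n) n.+1 by rewrite -(addn1 n) iotaD cats1 addnC.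
  by rewrite big_rcons_op.
have v0 : forall n, 0 <= varpi eta p n.
  by move=> n; rewrite /varpi; case: (bigmono (index_iota 1 n) (fun j => eta j / p j) 0 0 (lexx 0)).
have vS1 : forall n, varpi eta p n.+1 = \big[Num.max/0]_(j <- iota 1 n) (eta j / p j).
  by move=> n; rewrite /varpi /index_iota subn1.
have v1 : varpi eta p 1 = 0 by rewrite /varpi big_geq.
suff inv : forall n, - (alpha * varpi eta p n.+1) <= mu * r n.+1
                     <= mu * B + (1 - alpha) * varpi eta p n.+1.
  move=> t ht; case: t ht => [|[|n]] // _.
  have /andP[h1 h2] := inv n.+1.
  apply/andP; split.
    rewrite ler_pdivrMr //; lra.
  rewrite -lerBlDl ler_pdivlMr //; lra.
elim=> [|n IH].
  rewrite v1 !mulr0 oppr0 addr0; apply/andP; split; nra.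
have /andP[IHl IHu] := IH.
set q := eta n.+1 / p n.+1.
have /andP[p0 p1] := hp n.+1 erefl.
have e0 := heta n.+1 erefl.
have q0 : 0 < q by rewrite /q divr_gt0.
have vs0 := v0 n.+1.
have hm : 0 <= Num.max q 0 by rewrite le_max lexx orbT.
have [hv1 hv3] := bigmono (iota 1 n) (fun j => eta j / p j) _ _ hm.
rewrite -vS -vS1 in hv1 hv3.
have hv2 : q <= varpi eta p n.+2 by apply: le_trans hv3; rewrite le_max lexx.
have /andP[rs0 rsB] := hrs n.+1 erefl.
have U := hup n.+2 erefl; rewrite /= in U.
set E := miscov _ _ in U; set o := (if obs n.+1 then 1 else 0) in U.
have U' : g (r n.+2) = g (r n.+1) - (alpha - E) * o * q.
  by rewrite U /q; ring.
have ho : o = 0 \/ o = 1 by rewrite /o; case: (obs n.+1); [right|left].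
have hE : E = (if r n.+1 < rstar n.+1 then 1 else 0) by [].
apply/andP; split.
- case: (lerP 0 (r n.+1)) => hr.
  + have : g (r n.+1) - alpha * q <= g (r n.+2).
      rewrite U'; case: ho => ->; rewrite hE; case: ifP => _; nra.
    move=> /smL /(_ (ltW (mulr_gt0 a0 q0))) h; nra.
  + have hE1 : E = 1 by rewrite hE (lt_le_trans hr rs0).
    have : g (r n.+1) - 0 <= g (r n.+2).
      rewrite U' hE1; case: ho => ->; nra.
    move=> /smL /(_ (lexx 0)) h; nra.
- case: (lerP (r n.+1) B) => hr.
  + have : g (r n.+2) <= g (r n.+1) + (1 - alpha) * q.
      rewrite U'; case: ho => ->; rewrite hE; case: ifP => _; nra.
    have h1a : 0 <= (1 - alpha) * q by apply: mulr_ge0; [lra | exact: ltW].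
    move=> /smU /(_ h1a) h; nra.
  + have hE0 : E = 0.
      by rewrite hE ltNge (le_trans rsB (ltW hr)).
    have : g (r n.+2) <= g (r n.+1) + 0.
      rewrite U' hE0; case: ho => ->; nra.
    move=> /smU /(_ (lexx 0)) h; nra.
Qed.
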